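(* Let $p>1$ and let $A$ be a complex $r$-matrix of order $n_1\times\cdots\times n_r$. Then \[ \|A\|_p\leq|A|_{p/(p-1)}, \] and equality holds if and only if $A$ is a rank-one matrix.
   Context: An $r$-matrix of order $n_1\times\cdots\times n_r$ is a function on $[n_1]\times\cdots\times[n_r]$ with values $a_{i_1,\ldots,i_r}$. $|A|_q=(\sum|a_{i_1,\ldots,i_r}|^q)^{1/q}$ is the entrywise $\ell^q$ norm. The spectral $p$-norm is $\|A\|_p=\max\{|\sum a_{i_1,\ldots,i_r}\overline{x^{(1)}_{i_1}}\cdots\overline{x^{(r)}_{i_r}}|:\mathbf{x}^{(k)}\in\mathbb{C}^{n_k},\ |\mathbf{x}^{(k)}|_p=1\ \forall k\}$. $A$ is rank-one if there are vectors $\mathbf{x}^{(k)}\in\mathbb{C}^{n_k}$ with $a_{i_1,\ldots,i_r}=x^{(1)}_{i_1}\cdots x^{(r)}_{i_r}$ for all indices. *)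

(* Defs.v *)
From HB Require Import structures.
From mathcomp Require Import all_boot all_order all_algebra.
From mathcomp Require Import complex.
From mathcomp Require Import boolp classical_sets reals exp.
Set Implicit Arguments. Unset Strict Implicit. Unset Printing Implicit Defensive.
Import Order.TTheory GRing.Theory Num.Theory.
Local Open Scope ring_scope.

Definition tindex (r : nat) (n : 'I_r -> nat) : finType :=
  {dffun forall k : 'I_r, 'I_(n k)}.

Definition rmatrix (R : realType) (r : nat) (n : 'I_r -> nat) :=
  tindex n -> R[i].

Definition entry_norm (R : realType) (r : nat) (n : 'I_r -> nat)
  (q : R) (A : rmatrix R n) : R :=
  (\sum_(idx : tindex n) (Normc.normc (A idx)) `^ q) `^ (q^-1).

Definition vec_norm (R : realType) (m : nat) (p : R) (x : 'I_m -> R[i]) : R :=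
  (\sum_(j < m) (Normc.normc (x j)) `^ p) `^ (p^-1).

Definition mform (R : realType) (r : nat) (n : 'I_r -> nat)
  (A : rmatrix R n) (x : forall k : 'I_r, 'I_(n k) -> R[i]) : R[i] :=
  \sum_(idx : tindex n) A idx * \prod_(k < r) conjc (x k (idx k)).

(* spectral p-norm: the max (here: sup; the max is attained by compactness)
   of |form| over p-unit vectors *)
Definition spectral_norm (R : realType) (r : nat) (n : 'I_r -> nat)
  (p : R) (A : rmatrix R n) : R :=
  sup [set t : R | exists x : forall k : 'I_r, 'I_(n k) -> R[i],
        (forall k, vec_norm p (x k) = 1) /\ t = Normc.normc (mform A x)]%classic.

Definition rank_one (R : realType) (r : nat) (n : 'I_r -> nat)
  (A : rmatrix R n) : Prop :=
  exists x : forall k : 'I_r, 'I_(n k) -> R[i],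
    forall idx : tindex n, A idx = \prod_(k < r) x k (idx k).

(* Main.v *)
Require Import Defs.
From HB Require Import structures.
From mathcomp Require Import all_boot all_order all_algebra.
From mathcomp Require Import complex.
From mathcomp Require Import boolp classical_sets reals exp.
From mathcomp Require Import ring lra.
From mathcomp Require Import topology normedtype derive.
Import Order.TTheory GRing.Theory Num.Theory.
Local Open Scope ring_scope.

Module Part1.
Local Open Scope ring_scope.

Section Basic.
Variable R : realType.
Local Notation N := (@Normc.normc R).
Local Open Scope complex_scope.

Lemma N_ge0 (z : R[i]) : 0 <= N z.
Proof. by case: z => a b; exact: sqrtr_ge0. Qed.

Lemma normE (z : R[i]) : `|z| = (N z)%:C.
Proof. by case: z => a b; rewrite normc_def. Qed.

Lemma N_conj (z : R[i]) : N (conjc z) = N z.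
Proof. by case: z => a b; rewrite /= sqrrN. Qed.

Lemma mul_conjN (z : R[i]) : z * conjc z = ((N z) ^+ 2)%:C.
Proof. by rewrite -sqr_normc normE rmorphXn. Qed.

Lemma N_real (a : R) : N a%:C = `|a|.
Proof. by rewrite /= expr0n /= addr0 sqrtr_sqr. Qed.

Lemma N_sum (I : Type) (s : seq I) (P : pred I) (F : I -> R[i]) :
  N (\sum_(i <- s | P i) F i) <= \sum_(i <- s | P i) N (F i).
Proof.
elim/big_rec2: _ => [|i x y _ Hxy]; first by rewrite Normc.normc0.
by apply: le_trans (le_normcD _ _) _; rewrite lerD2l.
Qed.

Lemma N_prod (I : Type) (s : seq I) (P : pred I) (F : I -> R[i]) :
  N (\prod_(i <- s | P i) F i) = \prod_(i <- s | P i) N (F i).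
Proof.
elim/big_rec2: _ => [|i x y _ <-]; first by rewrite Normc.normc1.
by rewrite Normc.normcM.
Qed.

Lemma real_prod (I : Type) (s : seq I) (P : pred I) (F : I -> R) :
  (\prod_(i <- s | P i) F i)%:C = \prod_(i <- s | P i) (F i)%:C.
Proof. by rewrite rmorph_prod. Qed.

End Basic.

Section Distr.
Lemma sum_prod_dffun (Rg : comNzRingType) (I : finType) (T_ : I -> finType)
   (F : forall i, T_ i -> Rg) :
  \sum_(t : {dffun forall i, T_ i}) \prod_i F i (t i) = \prod_i \sum_(j : T_ i) F i j.
Proof.
rewrite (reindex (@dffun_of_fprod I T_)); last exact/onW_bij/dffun_of_fprod_bij.
under eq_bigr do under eq_bigr do rewrite ffunE.
pose P_ := fun i => [ffun j : T_ i => F i j].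
transitivity (\sum_(t : fprod T_) \prod_(i in I) P_ i (t i)).
  by apply: eq_bigr => t _; apply: eq_bigr => i _; rewrite ffunE.
rewrite big_fprod.
transitivity (\prod_i \sum_(j in tagged_with T_ i) untag 0 (P_ i) j).
  by rewrite bigA_distr_big_dep.
apply: eq_bigr => i _; rewrite -(big_tag (fun i => P_ i)).
by apply: eq_bigr => j _; rewrite /P_ ffunE.
Qed.
End Distr.

End Part1.
Import Part1.

Module Part2.
Local Open Scope ring_scope.

Section Young.
Variable R : realType.

Lemma ln_le1 {x : R} : 0 < x -> ln x <= x - 1.
Proof.
move=> x0; have := @le_ln1Dx R (x - 1).
have -> : 1 + (x - 1) = x by rewrite addrC subrK.
by apply; rewrite -subr_gt0 opprK subrK.
Qed.

Lemma ln_lt1 (x : R) : 0 < x -> x != 1 -> ln x < x - 1.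
Proof.
move=> x0 x1; set s := Num.sqrt x.
have s0 : 0 < s by rewrite sqrtr_gt0.
have ss : s * s = x by rewrite -expr2 sqr_sqrtr // ltW.
have s1 : s != 1 by apply: contraNneq x1 => e; rewrite -ss e mulr1.
have -> : ln x = ln s + ln s by rewrite -ss lnM // posrE.
apply: (le_lt_trans (lerD (ln_le1 s0) (ln_le1 s0))).
rewrite -subr_gt0 -ss.
have -> : s * s - 1 - (s - 1 + (s - 1)) = (s - 1) ^+ 2 by ring.
by rewrite lt_def sqrf_eq0 subr_eq0 s1 sqr_ge0.
Qed.

Lemma young_eq (a b p q : R) : 0 <= a -> 0 <= b -> 0 < p -> 0 < q ->
  p^-1 + q^-1 = 1 -> a * b = a `^ p / p + b `^ q / q -> a `^ p = b `^ q.
Proof.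
move=> a0 b0 p0 q0 pq E.
have pp : 0 < p^-1 by rewrite invr_gt0.
have qq : 0 < q^-1 by rewrite invr_gt0.
case: (eqVneq a 0) => [az|anz].
  move: E; rewrite az mul0r powR0 ?gt_eqF // mul0r add0r => /esym/eqP.
  by rewrite mulf_eq0 invr_eq0 (gt_eqF q0) orbF => /eqP ->.
case: (eqVneq b 0) => [bz|bnz].
  move: E; rewrite bz mulr0 powR0 ?gt_eqF // mul0r addr0 => /esym/eqP.
  by rewrite mulf_eq0 invr_eq0 (gt_eqF p0) orbF => /eqP ->.
have ap : 0 < a by rewrite lt_neqAle eq_sym anz.
have bp : 0 < b by rewrite lt_neqAle eq_sym bnz.
apply/eqP/negPn/negP => uv.
set u := a `^ p in uv E *; set v := b `^ q in uv E *.
have u0 : 0 < u by rewrite powR_gt0.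
have v0 : 0 < v by rewrite powR_gt0.
have [M hM] : {M | M = u / p + v / q} by eexists.
rewrite -hM in E.
have M0 : 0 < M by rewrite hM addr_gt0 // divr_gt0.
have lna : ln a = p^-1 * ln u by rewrite ln_powR mulrA mulVf ?gt_eqF // mul1r.
have lnb : ln b = q^-1 * ln v by rewrite ln_powR mulrA mulVf ?gt_eqF // mul1r.
have E0 : p^-1 * (u / M - 1) + q^-1 * (v / M - 1) = 0.
  have -> : p^-1 * (u / M - 1) + q^-1 * (v / M - 1) =
    (u / p + v / q) / M - (p^-1 + q^-1) by ring.
  by rewrite -hM pq divff ?gt_eqF // subrr.
have ne1 : forall w, w != M -> w / M != 1.
  move=> w; apply: contraNneq => h.
  by rewrite -(divfK (negbT (gt_eqF M0)) w) h mul1r.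
have key : p^-1 * ln (u / M) + q^-1 * ln (v / M) < 0.
  rewrite -E0; case: (eqVneq u M) => [uM|uMn].
    have vM : v != M by rewrite -uM eq_sym.
    apply: ler_ltD.
      by rewrite uM divff ?gt_eqF // ln1 subrr.
    by rewrite ltr_pM2l // ln_lt1 ?divr_gt0 ?ne1.
  apply: ltr_leD.
    by rewrite ltr_pM2l // ln_lt1 ?divr_gt0 ?ne1.
  by rewrite ler_pM2l // ln_le1 ?divr_gt0.
have : ln (a * b) < ln M.
  rewrite lnM ?posrE // lna lnb -subr_lt0.
  move: key; rewrite !ln_div ?posrE //.
  have -> : p^-1 * (ln u - ln M) + q^-1 * (ln v - ln M) =
     p^-1 * ln u + q^-1 * ln v - (p^-1 + q^-1) * ln M by ring.
  by rewrite pq mul1r.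
by rewrite ltr_ln ?posrE ?mulr_gt0 // E ltxx.
Qed.
End Young.

End Part2.
Import Part2.

Module Part3.
Import numFieldNormedType.Exports.
Local Open Scope ring_scope.
Local Open Scope classical_set_scope.
Local Open Scope complex_scope.

Section Cont.
Variable R : realType.
Variable X : topologicalType.
Local Notation N := (@Normc.normc R).
Local Notation C := (R[i])^o.

Lemma cont_sum {V : normedModType R} (J : Type) (s : seq J) (F : J -> X -> V) :
  (forall j, continuous (F j)) -> continuous (fun x => \sum_(j <- s) F j x).
Proof.
move=> H; elim: s => [|a s IH] x.
  under eq_fun do rewrite big_nil; exact: cst_continuous.
under eq_fun do rewrite big_cons.
exact: (cvgD (H a x) (IH x)).
Qed.

Lemma cont_sumC (J : Type) (s : seq J) (F : J -> X -> C) :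
  (forall j, continuous (F j)) -> continuous (fun x => \sum_(j <- s) F j x).
Proof.
move=> H; elim: s => [|a s IH] x.
  under eq_fun do rewrite big_nil; exact: cst_continuous.
under eq_fun do rewrite big_cons.
exact: (cvgD (H a x) (IH x)).
Qed.

Lemma cont_prodC (J : Type) (s : seq J) (F : J -> X -> C) :
  (forall j, continuous (F j)) -> continuous (fun x => \prod_(j <- s) F j x).
Proof.
move=> H; elim: s => [|a s IH] x.
  under eq_fun do rewrite big_nil; exact: cst_continuous.
under eq_fun do rewrite big_cons.
exact: (cvgM (H a x) (IH x)).
Qed.

Lemma cont_MC (f g : X -> C) : continuous f -> continuous g ->
  continuous (fun x => f x * g x).
Proof. by move=> Hf Hg x; exact: (cvgM (Hf x) (Hg x)). Qed.

Lemma cont_real (g : X -> R) : continuous g -> continuous (fun x => ((g x)%:C : C)).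
Proof.
move=> H x; apply/(@cvgrPdist_lt _ C) => -[a b].
rewrite ltcE /= => /andP[/eqP -> a0].
have /cvgrPdist_lt/(_ _ a0) := H x.
apply: filterS => t ht.
by rewrite -rmorphB normE N_real complexr0 ltcR.
Qed.

Lemma cont_N (h : X -> C) : continuous h -> continuous (fun x => N (h x)).
Proof.
move=> H x; apply/cvgrPdist_lt => e e0.
have e0' : 0 < (e%:C : R[i]) by rewrite ltcR.
have /cvgrPdist_lt/(_ _ e0') := H x.
apply: filterS => t ht.
rewrite -ltcR; apply: le_lt_trans ht.
have := ler_dist_dist (h x : R[i]) (h t); rewrite (@normE R (h x)) (@normE R (h t)) -rmorphB (normE R (_ - _)%:C) N_real.
by [].
Qed.

Lemma cont_powR (g : X -> R) (p : R) : 0 < p -> (forall x, 0 <= g x) ->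
  continuous g -> continuous (fun x => g x `^ p).
Proof.
move=> p0 g0 H x.
case: (ltP 0 (g x)) => [gx0 | gx0].
  have HH : {for g x, continuous (fun a : R => a `^ p)}.
    apply/differentiable_continuous/derivable1_diffP.
    by apply: derivable_powR; rewrite in_itv /= gx0.
  exact: (continuous_comp (H x) HH).
have gx : g x = 0 by apply/eqP; rewrite eq_le gx0 g0.
apply/cvgrPdist_lt => e e0.
have d0 : 0 < e `^ p^-1 by rewrite powR_gt0.
have /cvgrPdist_lt/(_ _ d0) := H x.
apply: filterS => t ht.
rewrite gx powR0 ?gt_eqF // sub0r normrN ger0_norm ?powR_ge0 //.
move: ht; rewrite gx sub0r normrN ger0_norm // => ht.
have -> : e = (e `^ p^-1) `^ p by rewrite -powRrM mulVf ?gt_eqF // powRr1 // ltW.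
by rewrite gt0_ltr_powR // nnegrE // ltW.
Qed.

Lemma cont_cplx (g1 g2 : X -> R) : continuous g1 -> continuous g2 ->
  continuous (fun x => ((g1 x) +i* (g2 x) : C)).
Proof.
move=> H1 H2.
have E : (fun x => ((g1 x) +i* (g2 x) : C)) =
         (fun x => ((g1 x)%:C + (g2 x)%:C * 'i : C)).
  apply: funext => x; apply/eqP.
  by rewrite eq_complex /= !mulr0 !mul0r !mulr1 !subr0 !addr0 !add0r !eqxx.
suff H : continuous (fun x => ((g1 x)%:C + (g2 x)%:C * 'i : C)).
  exact: (eq_ind _ (fun g : X -> C => continuous g) H _ (esym E)).
move=> x.
exact: (cvgD (cont_real g1 H1 x) (cont_MC _ _ (cont_real g2 H2) (@cst_continuous _ _ ('i : C)) x)).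
Qed.

End Cont.

End Part3.
Import Part3.

Module Part4.
Import numFieldNormedType.Exports.
Local Open Scope ring_scope.
Local Open Scope classical_set_scope.
Local Open Scope complex_scope.

Lemma cplx (R : realType) (a b : R) : a +i* b = a%:C + b%:C * 'i.
Proof. by apply/eqP; rewrite eq_complex /= !mulr0 !mul0r !mulr1 !subr0 !addr0 !add0r !eqxx. Qed.

Section Attain.
Variables (R : realType) (r : nat) (n : 'I_r -> nat).
Local Notation N := (@Normc.normc R).
Local Notation I := ('I_r * nat * bool)%type.
Local Notation X := {ptws I -> R}.

Definition dec (f : I -> R) : forall k, 'I_(n k) -> R[i] :=
  fun k j => f (k, val j, false) +i* f (k, val j, true).

Definition enc (x : forall k, 'I_(n k) -> R[i]) : I -> R :=
  fun t => match t with (k, j, b) =>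
    match insub j with Some j' => if b then complex.Im (x k j') else complex.Re (x k j')
                      | None => 0 end end.

Lemma decK x : dec (enc x) = x.
Proof.
apply: functional_extensionality_dep => k; apply: funext => j.
by rewrite /dec /enc valK; case: (x k j).
Qed.

Lemma Re_le (z : R[i]) : `|complex.Re z| <= N z.
Proof.
by case: z => a b /=; rewrite -sqrtr_sqr ler_sqrt ?lerDl ?sqr_ge0 ?addr_ge0 ?sqr_ge0.
Qed.

Lemma Im_le (z : R[i]) : `|complex.Im z| <= N z.
Proof.
by case: z => a b /=; rewrite -sqrtr_sqr ler_sqrt ?lerDr ?sqr_ge0 ?addr_ge0 ?sqr_ge0.
Qed.

Variable (p : R) (p0 : 0 < p).

Lemma vec_norm1 m (x : 'I_m -> R[i]) :
  vec_norm p x = 1 <-> \sum_j N (x j) `^ p = 1.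
Proof.
rewrite /vec_norm; split => [/eqP|->]; last by rewrite powR1.
rewrite powR_eq1 invr_eq0 (gt_eqF p0) orbF => /orP[/eqP //|].
by rewrite ltNge sumr_ge0 // => i _; rewrite powR_ge0.
Qed.

Lemma unit_le1 m (x : 'I_m -> R[i]) : vec_norm p x = 1 -> forall j, N (x j) <= 1.
Proof.
move=> /vec_norm1 h j; rewrite leNgt; apply/negP => hj.
have : 1 `^ p < N (x j) `^ p by rewrite gt0_ltr_powR // nnegrE ?N_ge0.
rewrite powR1 => h1.
have : N (x j) `^ p <= \sum_j N (x j) `^ p.
  rewrite (bigD1 j) //= lerDl sumr_ge0 // => i _; exact: powR_ge0.
by rewrite h leNgt h1.
Qed.

Lemma cont_proj (t : I) : continuous (fun f : X => f t).
Proof. move=> f; exact: (@proj_continuous I (fun _ => R) t f). Qed.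

Lemma cont_projN (t : I) : continuous (fun f : X => - f t).
Proof. move=> f; exact: (cvgN (cont_proj t f)). Qed.

Lemma cont_dec k j : continuous (fun f : X => (dec f k j : (R[i])^o)).
Proof.
exact: (@cont_cplx R X (fun f : X => f (k, val j, false))
   (fun f : X => f (k, val j, true)) (cont_proj _) (cont_proj _)).
Qed.

Lemma cont_decJ k j : continuous (fun f : X => (conjc (dec f k j) : (R[i])^o)).
Proof.
have H := (@cont_cplx R X (fun f : X => f (k, val j, false))
   (fun f : X => - f (k, val j, true)) (cont_proj _)
   (cont_projN _)).
have E : (fun f : X => (conjc (dec f k j) : (R[i])^o)) =
   (fun f : X => ((f (k, val j, false)) +i* (- f (k, val j, true)) : (R[i])^o)) by [].
exact: (eq_ind _ (fun g : X -> (R[i])^o => continuous g) H _ (esym E)).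
Qed.

Variable (A : rmatrix R n).

Definition G (f : X) := N (mform A (dec f)).

Lemma cont_G : continuous G.
Proof.
apply: (@cont_N R X (fun f : X => (mform A (dec f) : (R[i])^o))).
apply: (@cont_sumC R X _ (index_enum _)
  (fun idx (f : X) => (A idx * \prod_(k < r) conjc (dec f k (idx k)) : (R[i])^o))) => idx.
apply: (@cont_MC R X (fun _ => A idx : (R[i])^o)); first exact: cst_continuous.
apply: (@cont_prodC R X _ (index_enum _) (fun k (f : X) => (conjc (dec f k (idx k)) : (R[i])^o))).
move=> k; exact: cont_decJ.
Qed.

Definition vsum (k : 'I_r) (f : X) := \sum_(j < n k) N (dec f k j) `^ p.

Lemma cont_vsum k : continuous (vsum k).
Proof.
apply: (@cont_sum R X R _ (index_enum _) (fun j (f : X) => N (dec f k j) `^ p)) => j.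
apply: (@cont_powR R X (fun f : X => N (dec f k j)) p p0); first by move=> f; exact: N_ge0.
exact: (@cont_N R X (fun f : X => (dec f k j : (R[i])^o)) (cont_dec k j)).
Qed.

Definition K : set X :=
  [set f : X | forall i, `[-1, 1]%classic (f i)] `&` \bigcap_(k in setT) (vsum k @^-1` [set 1]).

Lemma compact_K : compact K.
Proof.
apply: compact_closedI.
  have h := (@tychonoff I (fun _ => R) (fun _ => `[-1, 1]%classic) (fun _ => @segment_compact R (-1) 1)).
  exact h.
apply: closed_bigI => k _.
apply: preimage_closed; first by move=> f _; exact: cont_vsum.
exact: closed_eq.
Qed.

Lemma encK x : (forall k, vec_norm p (x k) = 1) -> K (enc x).
Proof.
move=> hx; split.
  move=> [[k j] b] /=; rewrite /enc.
  case: insubP => [j' _ _|_]; last by rewrite /= in_itv /= lerN10 ler01.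
  have h1 := unit_le1 _ _ (hx k) j'.
  rewrite /= in_itv /= -ler_norml; case: b.
    exact: le_trans (Im_le _) h1.
  exact: le_trans (Re_le _) h1.
move=> k _; rewrite /= /vsum decK; exact/vec_norm1.
Qed.

Lemma K_unit f : K f -> forall k, vec_norm p (dec f k) = 1.
Proof. by move=> [_ hf] k; apply/vec_norm1; exact: (hf k Logic.I). Qed.

Lemma spec_img :
  [set t | exists x, (forall k, vec_norm p (x k) = 1) /\ t = N (mform A x)] = G @` K.
Proof.
apply/seteqP; split => t.
  by move=> [x [hx ->]]; exists (enc x); [exact: encK | rewrite /G decK].
by move=> [f Kf <-]; exists (dec f); split => //; exact: K_unit.
Qed.

Lemma e0_unit : (forall k, (0 < n k)%N) ->
  exists x : forall k, 'I_(n k) -> R[i], forall k, vec_norm p (x k) = 1.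
Proof.
move=> hn; exists (fun k j => (if val j == 0%N then 1 else 0 : R[i])) => k; apply/vec_norm1.
rewrite (bigD1 (Ordinal (hn k))) //= big1 ?addr0.
  by rewrite expr1n expr0n /= addr0 sqrtr1 powR1.
move=> j hj; have -> : (val j == 0%N) = false.
  apply/negbTE; apply: contra hj => /eqP hj0; apply/eqP/val_inj => /=; exact: hj0.
by rewrite Normc.normc0 powR0 ?gt_eqF.
Qed.

Lemma attain : (forall k, (0 < n k)%N) ->
  exists x, (forall k, vec_norm p (x k) = 1) /\ spectral_norm p A = N (mform A x).
Proof.
move=> hn; rewrite /spectral_norm spec_img.
have cimg : compact (G @` K).
  exact: (continuous_compact (continuous_subspaceT cont_G) compact_K).
have ne : (G @` K) !=set0.
  have [x hx] := e0_unit hn.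
  by exists (G (enc x)), (enc x) => //; exact: encK.
have hs := compact_has_sup ne cimg.
have cl := closure_sup ne hs.2.
have : (G @` K) (sup (G @` K)).
  by move: cl; rewrite -(closure_id _).1 //; exact: compact_closed.
case=> f Kf Gf; exists (dec f); split; [exact: K_unit | by rewrite -Gf].
Qed.

End Attain.

End Part4.
Import Part4.

Module Part5.
Local Open Scope ring_scope.

Section Holder.
Variable R : realType.
Variables (p q : R) (p0 : 0 < p) (q0 : 0 < q) (pq : p^-1 + q^-1 = 1).

Lemma powR_div (a c x : R) : 0 <= a -> 0 < c -> (a / c) `^ x = a `^ x / c `^ x.
Proof.
move=> a0 c0; have -> : c^-1 = c `^ (-1) by rewrite powR_inv1 // ltW.
by rewrite powRM ?powR_ge0 // -powRrM mulN1r powRN.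
Qed.

Lemma powRK (s x : R) : 0 <= s -> x != 0 -> (s `^ x^-1) `^ x = s.
Proof. by move=> s0 x0; rewrite -powRrM mulVf // powRr1. Qed.

Variables (J : finType) (a b : J -> R).
Hypotheses (ha : forall j, 0 <= a j) (hb : forall j, 0 <= b j)
  (hbp : \sum_j b j `^ p = 1).

Let S := \sum_j a j `^ q.
Let al := S `^ q^-1.

Lemma S_ge0 : 0 <= S.
Proof. by rewrite sumr_ge0 // => j _; exact: powR_ge0. Qed.

Lemma holder_core : 0 < S ->
  \sum_j ((a j / al) `^ q / q + b j `^ p / p) = 1.
Proof.
move=> S0; have al0 : 0 < al by rewrite powR_gt0.
rewrite big_split /= -!mulr_suml hbp mul1r.
have E : forall j, (a j / al) `^ q = a j `^ q / S.
  by move=> j; rewrite powR_div // /al powRK ?S_ge0 ?gt_eqF.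
under eq_bigr do rewrite E.
by rewrite -mulr_suml divff ?gt_eqF // mul1r addrC.
Qed.

Lemma holder_le : \sum_j a j * b j <= al.
Proof.
have [S0|S0] := eqVneq S 0.
  have a0 : forall j, a j = 0.
    move=> j; apply: (@powR_eq0_eq0 _ _ q).
    have /psumr_eq0P := S0; apply => // i _; exact: powR_ge0.
  rewrite big1 ?powR_ge0 // => j _; by rewrite a0 mul0r.
have Sp : 0 < S by rewrite lt_neqAle eq_sym S0 S_ge0.
have al0 : 0 < al by rewrite powR_gt0.
have -> : \sum_j a j * b j = al * \sum_j (a j / al) * b j.
  rewrite mulr_sumr; apply: eq_bigr => j _.
  by rewrite mulrA mulrCA divff ?gt_eqF // mulr1.
rewrite -[X in _ <= X]mulr1 ler_pM2l // -(holder_core Sp).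
apply: ler_sum => j _; apply: conjugate_powR => //; last by rewrite addrC.
by rewrite divr_ge0 // ltW.
Qed.

Lemma holder_eq : 0 < S -> \sum_j a j * b j = al ->
  forall j, a j = al * b j `^ (p / q).
Proof.
move=> Sp E j; have al0 : 0 < al by rewrite powR_gt0.
have h : \sum_j a j * b j = al * \sum_j (a j / al) * b j.
  rewrite mulr_sumr; apply: eq_bigr => i _.
  by rewrite mulrA mulrCA divff ?gt_eqF // mulr1.
have E1 : \sum_j (a j / al) * b j = 1.
  by apply: (mulfI (negbT (gt_eqF al0))); rewrite -h E mulr1.
have le : forall i, (a i / al) * b i <= (a i / al) `^ q / q + b i `^ p / p.
  move=> i; apply: conjugate_powR => //; last by rewrite addrC.
  by rewrite divr_ge0 // ltW.
have : \sum_i ((a i / al) `^ q / q + b i `^ p / p - (a i / al) * b i) = 0.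
  by rewrite sumrB holder_core // E1 subrr.
move/psumr_eq0P => H.
have Hj : (a j / al) * b j = (a j / al) `^ q / q + b j `^ p / p.
  apply/eqP; rewrite eq_sym -subr_eq0; apply/eqP; apply: H => // i _.
  by rewrite subr_ge0.
have Y := @young_eq R (a j / al) (b j) q p (divr_ge0 (ha j) (ltW al0)) (hb j) q0 p0.
have Y' : (a j / al) `^ q = b j `^ p by apply: Y => //; rewrite addrC.
have : a j / al = b j `^ (p / q).
  have -> : a j / al = ((a j / al) `^ q) `^ q^-1.
    by rewrite -powRrM mulfV ?gt_eqF // powRr1 // divr_ge0 // ltW.
  by rewrite Y' -powRrM.
by move=> <-; rewrite mulrCA divff ?gt_eqF // mulr1.
Qed.
End Holder.

End Part5.
Import Part5.

Module Part6.
Local Open Scope ring_scope.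
Local Open Scope complex_scope.

Lemma powR_prod (R : realType) (I : Type) (s : seq I) (F : I -> R) x :
  (forall i, 0 <= F i) -> (\prod_(i <- s) F i) `^ x = \prod_(i <- s) F i `^ x.
Proof.
move=> F0; elim: s => [|a s IH]; first by rewrite !big_nil powR1.
by rewrite !big_cons powRM ?IH // prodr_ge0.
Qed.

Lemma conjM_real (R : realType) (z : R[i]) (b : R) :
  conjc (z * b%:C) = conjc z * b%:C.
Proof.
by case: z => a c; apply/eqP; rewrite eq_complex /=; apply/andP; split; apply/eqP; ring.
Qed.

Section Main.
Variables (R : realType) (r : nat) (n : 'I_r -> nat) (p : R) (hp : 1 < p).
Variable (A : rmatrix R n).
Local Notation N := (@Normc.normc R).
Local Notation q := (p / (p - 1)).

Lemma p0 : 0 < p. Proof. by apply: lt_trans hp. Qed.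
Lemma p1 : 0 < p - 1. Proof. by rewrite subr_gt0. Qed.
Lemma q0 : 0 < q. Proof. by rewrite divr_gt0 ?p0 ?p1. Qed.
Lemma pq : p^-1 + q^-1 = 1.
Proof.
have := p0; have := p1 => h1 h0.
rewrite invf_div; field; rewrite ?gt_eqF //.
Qed.
Lemma pdivq : p / q = p - 1.
Proof. have := p0; have := p1 => h1 h0; field; rewrite ?gt_eqF //. Qed.

Definition w (x : forall k, 'I_(n k) -> R[i]) (idx : tindex n) :=
  \prod_(k < r) N (x k (idx k)).

Lemma w_ge0 x idx : 0 <= w x idx.
Proof. by rewrite prodr_ge0 // => k _; exact: N_ge0. Qed.

Lemma sum_wp x : (forall k, vec_norm p (x k) = 1) ->
  \sum_(idx : tindex n) w x idx `^ p = 1.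
Proof.
move=> hx.
have E : forall idx, (w x idx) `^ p = \prod_k N (x k (idx k)) `^ p.
  by move=> idx; rewrite /w powR_prod // => k; exact: N_ge0.
under eq_bigr do rewrite E.
rewrite (sum_prod_dffun _ _ _ (fun k j => N (x k j) `^ p)).
by rewrite big1 // => k _; exact: ((@vec_norm1 R p p0 _ _).1 (hx k)).
Qed.

Lemma form_bound x : N (mform A x) <= \sum_(idx : tindex n) N (A idx) * w x idx.
Proof.
rewrite /mform; apply: (le_trans (@N_sum R _ _ _ _)); apply: ler_sum => idx _.
by rewrite Normc.normcM N_prod; under eq_bigr do rewrite N_conj.
Qed.

Lemma upper x : (forall k, vec_norm p (x k) = 1) -> N (mform A x) <= entry_norm q A.
Proof.
move=> hx; apply: le_trans (form_bound x) _.
apply: (@holder_le R p q p0 q0 pq _ (fun idx => N (A idx)) (w x)) => //.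
- by move=> idx; exact: N_ge0.
- by move=> idx; exact: w_ge0.
- exact: sum_wp.
Qed.

Lemma eq_case : (0 < r)%N -> (forall k, (0 < n k)%N) ->
  spectral_norm p A = entry_norm q A -> rank_one A.
Proof.
move=> hr hn Heq.
have [x [hx hs]] := @attain R r n p p0 A hn.
pose k0 := Ordinal hr.
pose S := \sum_(idx : tindex n) N (A idx) `^ q.
have S0 : 0 <= S by rewrite sumr_ge0 // => i _; exact: powR_ge0.
case: (eqVneq S 0) => [Sz | Snz].
  have A0 : forall idx, A idx = 0.
    move=> idx; apply: Normc.eq0_normc; apply: (@powR_eq0_eq0 _ _ q).
    by move/psumr_eq0P: Sz; apply => // i _; exact: powR_ge0.
  by exists (fun _ _ => 0) => idx; rewrite A0 (bigD1 k0) //= mul0r.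
have Sp : 0 < S by rewrite lt_neqAle eq_sym Snz S0.
have E1 : \sum_idx N (A idx) * w x idx = entry_norm q A.
  apply/le_anti/andP; split.
    apply: (@holder_le R p q p0 q0 pq _ (fun idx => N (A idx)) (w x)) => //.
    - by move=> idx; exact: N_ge0.
    - by move=> idx; exact: w_ge0.
    - exact: sum_wp.
  by rewrite -Heq hs; exact: form_bound.
have E2 : N (mform A x) = \sum_idx N (A idx) * w x idx.
  by apply/le_anti/andP; split; [exact: form_bound | rewrite E1 -Heq hs].
have hA := @holder_eq R p q p0 q0 pq _ (fun idx => N (A idx)) (w x)
  (fun idx => N_ge0 _ _) (w_ge0 x) (sum_wp x hx) Sp E1.
rewrite pdivq in hA.
pose F idx := A idx * \prod_(k < r) conjc (x k (idx k)).
have NF : forall idx, N (F idx) = N (A idx) * w x idx.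
  by move=> idx; rewrite Normc.normcM N_prod; under eq_bigr do rewrite N_conj.
have T : `|\sum_idx F idx| = \sum_idx `|F idx|.
  rewrite normE; under [in RHS]eq_bigr do rewrite normE.
  rewrite -rmorph_sum; congr (_%:C).
  by rewrite [LHS]E2; apply: eq_bigr => idx _; rewrite NF.
have [t t1 ht] := normC_sum_eq T.
pose y k j := x k j * (N (x k j) `^ (p - 1 - 1))%:C.
pose lam := (entry_norm q A)%:C * t.
exists (fun k j => if k == k0 then lam * y k j else y k j) => idx.
have -> : \prod_k (if k == k0 then lam * y k (idx k) else y k (idx k)) =
    lam * \prod_k y k (idx k).
  rewrite (bigD1 k0) //= [in RHS](bigD1 k0) //= -mulrA; congr (_ * (_ * _)).
  by apply: eq_bigr => k /negbTE ->.
have Py : \prod_k y k (idx k) =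
    (\prod_k x k (idx k)) * (w x idx `^ (p - 1 - 1))%:C.
  rewrite big_split /= -rmorph_prod; congr (_ * _%:C).
  by rewrite /w powR_prod // => k; exact: N_ge0.
rewrite Py; set P := \prod_k x k (idx k).
have NP : N P = w x idx by rewrite N_prod.
case: (eqVneq (w x idx) 0) => [w0|wn0].
  have NA0 : A idx = 0.
    by apply: Normc.eq0_normc; rewrite hA w0 powR0 ?mulr0 // (gt_eqF p1).
  have P0 : P = 0 by apply: Normc.eq0_normc; rewrite NP.
  by rewrite NA0 P0 mul0r mulr0.
have cP : \prod_(k < r) conjc (x k (idx k)) = conjc P by rewrite rmorph_prod.
have hF := ht idx isT.
rewrite normE NF /F cP in hF.
have H : A idx * (w x idx ^+ 2)%:C = (N (A idx) * w x idx)%:C * t * P.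
  by rewrite -hF -mulrA [conjc P * P]mulrC mul_conjN NP.
have w2 : (w x idx ^+ 2)%:C != 0 :> R[i].
  by rewrite -[0 : R[i]]/(0%:C) (inj_eq (@complexI R)) sqrf_eq0.
apply: (mulIf w2); rewrite H hA -(mulr_powRB1 (w_ge0 x idx) p1).
rewrite /lam /entry_norm !rmorphM; ring.
Qed.

Lemma q1 : 0 < q - 1.
Proof.
have -> : q - 1 = (p - 1)^-1.
  have := p1 => h1; field; rewrite ?gt_eqF //.
by rewrite invr_gt0 p1.
Qed.

Lemma qp : (q - 1) * p = q.
Proof. have := p1 => h1; field; rewrite ?gt_eqF //. Qed.

Lemma pqi : - p^-1 + 1 = q^-1.
Proof. by rewrite -[X in - _ + X]pq addKr. Qed.

Lemma specE : (forall k, (0 < n k)%N) -> spectral_norm p A <= entry_norm q A.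
Proof.
move=> hn; rewrite /spectral_norm; apply: ge_sup.
  have [x hx] := @e0_unit R r n p p0 hn.
  by exists (N (mform A x)), x.
by move=> t [x [hx ->]]; exact: upper.
Qed.

Lemma hsup : (forall k, (0 < n k)%N) -> has_sup
  [set t : R | exists x : forall k : 'I_r, 'I_(n k) -> R[i],
        (forall k, vec_norm p (x k) = 1) /\ t = N (mform A x)]%classic.
Proof.
move=> hn; split.
  have [x hx] := @e0_unit R r n p p0 hn.
  by exists (N (mform A x)), x.
by exists (entry_norm q A) => t [x [hx ->]]; exact: upper.
Qed.

Lemma r1_case : (forall k, (0 < n k)%N) -> rank_one A ->
  spectral_norm p A = entry_norm q A.
Proof.
move=> hn [x hA]; apply/le_anti/andP; split; first exact: specE.
suff [y [hy E]] : exists y, (forall k, vec_norm p (y k) = 1) /\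
    entry_norm q A <= N (mform A y).
  by apply: le_trans E _; apply: (sup_upper_bound (hsup hn)); exists y.
pose s k := \sum_j N (x k j) `^ q.
have s0 : forall k, 0 <= s k by move=> k; rewrite sumr_ge0 // => j _; exact: powR_ge0.
case: (pselect (exists k, s k = 0)) => [[k sk0] | hs].
  have x0 : forall j, x k j = 0.
    move=> j; apply: Normc.eq0_normc; apply: (@powR_eq0_eq0 _ _ q).
    by move/psumr_eq0P: sk0; apply => // i _; exact: powR_ge0.
  have A0 : forall idx, A idx = 0.
    by move=> idx; rewrite hA (bigD1 k) //= x0 mul0r.
  have [y hy] := @e0_unit R r n p p0 hn.
  exists y; split => //; apply: le_trans (N_ge0 _ _).
  rewrite /entry_norm big1 ?powR0 ?invr_eq0 ?gt_eqF ?q0 // => idx _.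
  by rewrite A0 Normc.normc0 powR0 // gt_eqF // q0.
have sp : forall k, 0 < s k.
  move=> k; rewrite lt_neqAle s0 andbT eq_sym; apply/eqP => h; apply: hs; by exists k.
pose c k := s k `^ (- p^-1).
have c0 : forall k, 0 < c k by move=> k; rewrite powR_gt0.
pose y k j := x k j * (c k * N (x k j) `^ (q - 1 - 1))%:C.
have Ny : forall k j, N (y k j) = c k * N (x k j) `^ (q - 1).
  move=> k j; rewrite /y Normc.normcM N_real ger0_norm; last first.
    by rewrite mulr_ge0 ?powR_ge0 // ltW.
  by rewrite mulrCA (mulr_powRB1 (N_ge0 _ _) q1).
exists y; split.
  move=> k; apply/(@vec_norm1 R p p0 _ _).
  under eq_bigr do rewrite Ny powRM ?powR_ge0 ?(ltW (c0 k)) // -powRrM qp.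
  rewrite -mulr_sumr -/(s k) /c -powRrM mulNr mulVf ?gt_eqF ?p0 //.
  by rewrite powR_inv1 ?(ltW (sp k)) // mulVf ?gt_eqF ?sp.
have xy : forall k j, x k j * conjc (y k j) = (c k * N (x k j) `^ q)%:C.
  move=> k j; rewrite /y conjM_real mulrA mul_conjN -rmorphM.
  congr (_%:C); rewrite mulrCA expr2 -mulrA (mulr_powRB1 (N_ge0 _ _) q1).
  by rewrite (mulr_powRB1 (N_ge0 _ _) q0).
have -> : mform A y = (\prod_k (c k * s k))%:C.
  rewrite /mform; transitivity
    (\sum_(idx : tindex n) \prod_k (x k (idx k) * conjc (y k (idx k)))).
    by apply: eq_bigr => idx _; rewrite hA big_split.
  rewrite (sum_prod_dffun _ _ _ (fun k j => x k j * conjc (y k j))) rmorph_prod.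
  apply: eq_bigr => k _; under eq_bigr do rewrite xy.
  by rewrite -rmorph_sum mulr_sumr.
rewrite N_real ger0_norm; last by rewrite prodr_ge0 // => k _; rewrite mulr_ge0 // ltW.
have cs : forall k, c k * s k = s k `^ q^-1.
  move=> k; rewrite /c -{2}(powRr1 (s0 k)) -powRD ?pqi //.
  by apply/implyP => _; rewrite gt_eqF.
under eq_bigr do rewrite cs.
rewrite /entry_norm -powR_prod; last by move=> k; exact: s0.
rewrite le_eqVlt; apply/orP; left; apply/eqP; congr (_ `^ _).
have -> : \sum_(idx : tindex n) N (A idx) `^ q =
    \sum_(idx : tindex n) \prod_k N (x k (idx k)) `^ q.
  apply: eq_bigr => idx _; rewrite hA N_prod powR_prod // => k; exact: N_ge0.
by rewrite (sum_prod_dffun _ _ _ (fun k j => N (x k j) `^ q)).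
Qed.

End Main.

End Part6.
Import Part6.

Theorem theorem20 (R : realType) (r : nat) (n : 'I_r -> nat)
  (hr : (0 < r)%N) (hn : forall k, (0 < n k)%N)
  (p : R) (hp : 1 < p) (A : rmatrix R n) :
  spectral_norm p A <= entry_norm (p / (p - 1)) A /\
  (spectral_norm p A = entry_norm (p / (p - 1)) A <-> rank_one A).
Proof.
split; first exact: (@specE R r n p hp A hn).
split; [exact: (@eq_case R r n p hp A hr hn) | exact: (@r1_case R r n p hp A hn)].
Qed.
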